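(* Assume the superexponential regime $a_T/T\to\infty$, and let $\hat c_{\mathrm R}(x,\mathbb P,T)=\max_{i\in\Sigma}\ell(x,i)$ for all $x,\mathbb P,T$. Then $\hat c_{\mathrm R}\in\mathcal C$, it satisfies the out-of-sample guarantee with speed $(a_T)$ (indeed $\mathbb P^\infty(c(x,\mathbb P)>\hat c_{\mathrm R}(x,\hat{\mathbb P}_T,T))=0$ for all $T$), and for every $\hat c\in\mathcal C$ satisfying the out-of-sample guarantee with speed $(a_T)$ we have $\hat c_{\mathrm R}\preceq_{\mathcal C}\hat c$.
   Context: Setting: $\Sigma=\{1,\dots,d\}$ ($d\ge2$) is finite; $\mathcal P\subset\mathbb R^d$ is the probability simplex over $\Sigma$ and $\mathcal P^o$ its relative interior (all entries positive). $\mathcal X\subset\mathbb R^n$ is compact and $\ell:\mathcal X\times\Sigma\to\mathbb R$ is continuous in $x$ for each $i$. For $x\in\mathcal X$, $\mu\in\mathbb R^d$ let $c(x,\mu)=\sum_{i\in\Sigma}\ell(x,i)\mu(i)$. Data $\xi_1,\xi_2,\dots$ are i.i.d. with law $\mathbb P\in\mathcal P$, $\mathbb P^\infty$ denotes their joint law, and $\hat{\mathbb P}_T(i)=\frac1T\sum_{t=1}^T\mathbf 1\{\xi_t=i\}$. $(a_T)_{T\ge1}$ is a sequence of positive reals with $a_T\to\infty$. A predictor is a sequence $\hat c=(\hat c(\cdot,\cdot,T))_{T\in\mathbb N}$ of functions $\mathcal X\times\mathcal P\to\mathbb R$. It is regular, written $\hat c\in\mathcal C$, if (i) the sequence $(\hat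 c(\cdot,\cdot,T))_T$ is uniformly bounded and equicontinuous on $\mathcal X\times\mathcal P$, and (ii) each $\hat c(x,\cdot,T)$ is differentiable in $\mathbb P$ and the sequence of derivative maps $(x,\mathbb P)\mapsto\nabla_{\mathbb P}\hat c(x,\mathbb P,T)$ is uniformly bounded and equicontinuous. (A sequence $(f_T)$ is equicontinuous if for every point $y$ and $\varepsilon>0$ there is a neighbourhood $U$ of $y$ with $|f_T(y)-f_T(z)|<\varepsilon$ for all $z\in U$ and all $T$.) Out-of-sample guarantee with speed $(a_T)$: for all $x\in\mathcal X$ and $\mathbb P\in\mathcal P^o$, $\limsup_{T\to\infty}\frac1{a_T}\log\mathbb P^\infty\big(c(x,\mathbb P)>\hat c(x,\hat{\mathbb P}_T,T)\big)\le-1$. Order: $\hat c_1\preceq_{\mathcal C}\hat c_2$ iff for all $(x,\mathbb P)\in\mathcal X\times\mathcal P^o$, $\limsup_{T\to\infty}\frac{|\hat c_1(x,\mathbb P,T)-c(x,\mathbb P)|}{|\hat c_2(x,\mathbb P,T)-c(x,\mathbb P)|}\le1$, with the convention $0/0=1$. *)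

(* Defs.v *)
(* R : realType, vectors in R^k are row vectors 'rV[R]_k
   (with the library's max-norm), Sigma = 'I_d. *)
From HB Require Import structures.
From mathcomp Require Import all_boot all_order all_algebra.
From mathcomp Require Import all_classical all_reals all_analysis.
Set Implicit Arguments. Unset Strict Implicit. Unset Printing Implicit Defensive.
Import Order.TTheory GRing.Theory Num.Theory.
Import numFieldNormedType.Exports.
Local Open Scope classical_set_scope.
Local Open Scope ring_scope.

Section Defs.
Variables (R : realType) (n d : nat).

Definition simplex : set 'rV[R]_d :=
  [set P | (forall i, 0 <= P 0 i) /\ \sum_(i < d) P 0 i = 1].
Definition simplex_int : set 'rV[R]_d :=
  [set P | (forall i, 0 < P 0 i) /\ \sum_(i < d) P 0 i = 1].

Definition cost (ell : 'rV[R]_n -> 'I_d -> R) (x : 'rV[R]_n) (mu : 'rV[R]_d) : R :=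
  \sum_(i < d) ell x i * mu 0 i.

(* a predictor: (x, P, T) |-> hat c(x, P, T); only values on X x simplex matter *)
Definition predictor := 'rV[R]_n -> 'rV[R]_d -> nat -> R.

Definition unif_bounded {V : normedModType R} (X : set 'rV[R]_n)
  (f : 'rV[R]_n -> 'rV[R]_d -> nat -> V) : Prop :=
  exists M : R, forall T x P, X x -> simplex P -> `|f x P T| <= M.

Definition equicont {V : normedModType R} (X : set 'rV[R]_n)
  (f : 'rV[R]_n -> 'rV[R]_d -> nat -> V) : Prop :=
  forall x P, X x -> simplex P -> forall e : R, 0 < e ->
    exists2 del : R, 0 < del &
      forall y Q, X y -> simplex Q -> `|x - y| < del -> `|P - Q| < del ->
        forall T, `|f x P T - f y Q T| < e.

Definition grad_within (f : 'rV[R]_d -> R) (P g : 'rV[R]_d) : Prop :=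
  forall e : R, 0 < e -> exists2 del : R, 0 < del &
    forall Q, simplex Q -> `|Q - P| < del ->
      `|f Q - f P - \sum_(i < d) g 0 i * (Q 0 i - P 0 i)| <= e * `|Q - P|.

Definition regular (X : set 'rV[R]_n) (ch : predictor) : Prop :=
  [/\ unif_bounded X ch, equicont X ch &
      exists g : 'rV[R]_n -> 'rV[R]_d -> nat -> 'rV[R]_d,
        [/\ (forall T x P, X x -> simplex P ->
               grad_within (fun Q => ch x Q T) P (g x P T)),
            unif_bounded X g & equicont X g]].

Definition emp (T : nat) (s : {ffun 'I_T -> 'I_d}) : 'rV[R]_d :=
  \row_i ((#|[set t | s t == i]|)%:R / T%:R).

(* P^oo( hat P_T in E ): the event only depends on xi_1..xi_T, which are
   i.i.d. with law P, so its probability is the finite sum below *)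
Definition prob_iid (P : 'rV[R]_d) (T : nat) (E : 'rV[R]_d -> bool) : R :=
  \sum_(s : {ffun 'I_T -> 'I_d}) (\prod_(t < T) P 0 (s t)) * (E (emp s))%:R.

Definition elog (p : R) : \bar R := if p == 0 then (-oo)%E else (ln p)%:E.

Definition oos_guarantee (X : set 'rV[R]_n) (ell : 'rV[R]_n -> 'I_d -> R)
  (a : nat -> R) (ch : predictor) : Prop :=
  forall x P, X x -> simplex_int P ->
    (limn_esup (fun T => ((a T)^-1)%:E *
       elog (prob_iid P T (fun Ph => (cost ell x P > ch x Ph T)%R))) <= (-1)%:E)%E.

Definition eratio (u v : R) : \bar R :=
  if v == 0 then (if u == 0 then 1%E else +oo%E) else (u / v)%:E.

Definition preceq (X : set 'rV[R]_n) (ell : 'rV[R]_n -> 'I_d -> R)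
  (c1 c2 : predictor) : Prop :=
  forall x P, X x -> simplex_int P ->
    (limn_esup (fun T => eratio `|c1 x P T - cost ell x P|%R
                                `|c2 x P T - cost ell x P|%R) <= 1%:E)%E.

End Defs.

(* Main.v *)
Require Import Defs.
From HB Require Import structures.
From mathcomp Require Import all_boot all_order all_algebra.
From mathcomp Require Import all_classical all_reals all_analysis.
From mathcomp.algebra_tactics Require Import ring lra.
Import Order.TTheory GRing.Theory Num.Theory.
Import numFieldNormedType.Exports.
Local Open Scope classical_set_scope.
Local Open Scope ring_scope.
Lemma sup_rangeP (R : realType) d (f : 'I_d -> R) : (0 < d)%N ->
  exists i, sup (range f) = f i /\ forall j, f j <= f i.
Proof.
move=> d0; pose i0 := Ordinal d0.
have [i _ Hi] := @arg_maxP _ R _ i0 xpredT f isT.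
exists i; split; last by move=> j; exact: Hi.
apply/eqP; rewrite eq_le; apply/andP; split.
- apply: ge_sup; first by exists (f i), i.
  by move=> _ [j _ <-]; exact: Hi.
- apply: ub_le_sup; last by exists i.
  by exists (f i) => _ [j _ <-]; exact: Hi.
Qed.

Lemma within_epsdel (R : realType) n d (X : set 'rV[R]_n)
  (f : 'rV[R]_n -> 'I_d -> R) x :
  (forall i, {within X, continuous (fun y => f y i)}) -> X x ->
  forall e, 0 < e -> exists2 del, 0 < del &
    forall y, X y -> `|x - y| < del -> forall i, `|f x i - f y i| < e.
Proof.
move=> fc Xx e e0.
have : \forall y \near within X (nbhs x), forall i, `|f x i - f y i| < e.
  apply: filter_forall => i.
  have := fc i x.
  move=> H; have {H} := (@cvgrPdist_lt _ _ _ _ (nbhs_subspace_filter x) _ _).1 H.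
  move=> /(_ e e0); rewrite -nbhs_subspace_in //.
move=> /nbhs_ballP [del /= del0 H]; exists del => // y Xy xy i.
apply: H => //.
by rewrite -ball_normE /=.
Qed.

Lemma counts_real d T (k : 'I_d -> nat) : (\sum_i k i)%N = T ->
  exists s : {ffun 'I_T -> 'I_d}, forall i, #|[set t | s t == i]| = k i.
Proof.
move=> HT.
pose L := flatten [seq nseq (k i) i | i <- enum 'I_d].
have cL i : count_mem i L = k i.
  rewrite count_flatten -map_comp.
  rewrite sumnE big_map big_enum /=.
  rewrite (bigD1 i) //= big1 ?addn0.
    by rewrite count_nseq /= (introT eqP (erefl i)) mul1n.
  move=> j ji; rewrite count_nseq /=; case: eqP => [ij|]; last by rewrite mul0n.
  by move: ji; rewrite ij (introT eqP (erefl i)).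
have sL : size L == T.
  rewrite size_flatten /shape -map_comp sumnE big_map big_enum /= -HT.
  by apply/eqP/eq_bigr => i _; rewrite /= size_nseq.
pose tL := Tuple sL.
exists [ffun t => tnth tL t] => i.
rewrite -cL (_ : L = tL) // -[in RHS](map_tnth_enum tL) count_map cardE.
rewrite /enum_mem -enumT /= filter_predT.
rewrite size_filter; apply: eq_count => t.
by apply/idP/idP => [/set_mem|H]; [rewrite /= ffunE | apply/mem_set; rewrite /= ffunE].
Qed.


Lemma realizable (R : realType) d (P : 'rV[R]_d) T : (0 < d)%N -> (0 < T)%N ->
  simplex P ->
  exists s : {ffun 'I_T -> 'I_d}, simplex (emp R s) /\ `|P - emp R s| <= d%:R / T%:R.
Proof.
move=> d0 T0 [P0 P1]; pose i0 := Ordinal d0.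
have Tpos : 0 < T%:R :> R by rewrite ltr0n.
pose r j := Num.trunc (T%:R * P 0 j).
have rle j : (r j)%:R <= T%:R * P 0 j by rewrite truncn_le mulr_ge0.
have rgt j : T%:R * P 0 j < (r j).+1%:R by exact: truncnS_gt.
have sumT : \sum_j T%:R * P 0 j = T%:R :> R by rewrite -mulr_sumr P1 mulr1.
have sumT' : T%:R * P 0 i0 + \sum_(j | j != i0) T%:R * P 0 j = T%:R.
  by rewrite -[RHS]sumT [RHS](bigD1 i0).
pose S := (\sum_(j | j != i0) r j)%N.
have SR : S%:R = \sum_(j | j != i0) (r j)%:R :> R by rewrite natr_sum.
have SleT : (S <= T)%N.
  rewrite -(ler_nat R) SR -sumT'.
  apply: (@le_trans _ _ (\sum_(j | j != i0) T%:R * P 0 j)).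
    by apply: ler_sum => j _.
  by rewrite lerDr mulr_ge0.
pose k j := if j == i0 then (T - S)%N else r j.
have Hk : (\sum_j k j)%N = T.
  rewrite (bigD1 i0) //= {1}/k eqxx.
  rewrite (eq_bigr r); first by rewrite -/S subnK.
  by move=> j /negbTE ji; rewrite /k ji.
have [s Hs] := @counts_real _ _ _ Hk.
have Es : forall j, emp R s 0 j = (k j)%:R / T%:R.
  by move=> j; rewrite mxE Hs.
exists s; split.
  split; first by move=> j; rewrite Es divr_ge0.
  under eq_bigr do rewrite Es.
  by rewrite -mulr_suml -natr_sum Hk divff // gt_eqF.
rewrite /Num.norm /= mx_normrE; apply: bigmax_le; first by rewrite divr_ge0.
move=> [u j] _ /=; rewrite (ord1 u) !mxE Hs.
have -> : P 0 j - (k j)%:R / T%:R = (T%:R * P 0 j - (k j)%:R) / T%:R.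
  by field; rewrite gt_eqF.
rewrite normrM [`|_^-1|]gtr0_norm ?invr_gt0 //; apply: ler_wpM2r; first by rewrite invr_ge0 ltW.
rewrite /k; case: eqP => [->|/eqP ji].
  rewrite natrB // SR.
  have -> : T%:R * P 0 i0 - (T%:R - \sum_(j | j != i0) (r j)%:R)
      = - \sum_(j | j != i0) (T%:R * P 0 j - (r j)%:R).
    rewrite sumrB; move: sumT'.
    set A := \sum_(j | _) T%:R * P 0 j; set B := \sum_(j | _) (r j)%:R; lra.
  rewrite normrN ger0_norm; last by apply: sumr_ge0 => l _; rewrite subr_ge0.
  apply: (@le_trans _ _ (\sum_(j | j != i0) (1 : R))).
    apply: ler_sum => l _; rewrite lerBlDr addrC.
    by apply: ltW; have := rgt l; rewrite -natr1.
  rewrite -[X in _ <= X%:R]card_ord -sumr_const [X in _ <= X](bigD1 i0) //=.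
  by rewrite lerDr.
rewrite ger0_norm ?subr_ge0 //.
have := rgt j; rewrite -natr1 => H.
have d1 : 1 <= d%:R :> R by rewrite ler1n.
lra.
Qed.

Lemma prob_lb (R : realType) d (Q : 'rV[R]_d) q T (E : 'rV[R]_d -> bool)
  (s : {ffun 'I_T -> 'I_d}) :
  0 <= q -> (forall i, q <= Q 0 i) -> E (emp R s) -> q ^+ T <= prob_iid Q T E.
Proof.
move=> q0 qQ Es; rewrite /prob_iid (bigD1 s) //= Es mulr1.
apply: (@le_trans _ _ (\prod_(t < T) Q 0 (s t))); last first.
  rewrite lerDl; apply: sumr_ge0 => s' _; apply: mulr_ge0; last by [].
  by apply: prodr_ge0 => t _; apply: le_trans (qQ _).
rewrite -[in X in X <= _](card_ord T) -prodr_const.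
by apply: ler_prod => t _; rewrite q0 qQ.
Qed.

Lemma esup_ev (R : realType) (u : nat -> \bar R) (l m : \bar R) :
  (limn_esup u <= l)%E -> (l < m)%E -> \forall T \near \oo, (u T < m)%E.
Proof.
move=> ul lm; have : (limn_esup u < m)%E by apply: le_lt_trans ul lm.
rewrite /limn_esup /limf_esup => /ereal_inf_lt [_ [V FV <-]] Vm.
apply: filterS FV => T VT; apply: le_lt_trans Vm.
by apply: ereal_sup_ubound; exists T.
Qed.

Lemma esup_le_ev (R : realType) (u : nat -> \bar R) (l : \bar R) :
  (\forall T \near \oo, (u T <= l)%E) -> (limn_esup u <= l)%E.
Proof.
move=> H; rewrite /limn_esup /limf_esup.
apply: (@le_trans _ _ (ereal_sup (u @` [set T | (u T <= l)%E]))).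
  by apply: ereal_inf_lbound; exists [set T | (u T <= l)%E].
by apply: ge_ereal_sup => _ [T HT <-].
Qed.

Lemma esup_le_eps (R : realType) (u : nat -> \bar R) (l : R) :
  (forall e, 0 < e -> \forall T \near \oo, (u T <= (l + e)%:E)%E) ->
  (limn_esup u <= l%:E)%E.
Proof.
move=> H; apply/lee_addgt0Pr => e e0.
by apply: esup_le_ev; rewrite -EFinD; exact: H.
Qed.

Lemma key (R : realType) n d (X : set 'rV[R]_n) (ell : 'rV[R]_n -> 'I_d -> R)
  (a : nat -> R) (ch : predictor R n d) x P i :
  (0 < d)%N -> (forall T, 0 < a T) -> (fun T => a T / T%:R) @ \oo --> +oo ->
  equicont X ch -> oos_guarantee X ell a ch -> X x -> simplex_int P ->
  (forall j, ell x j <= ell x i) -> forall eta, 0 < eta ->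
  \forall T \near \oo, ell x i - eta < ch x P T.
Proof.
move=> d0 apos aT eqc oos Xx [Pp P1] imax eta eta0.
have Ps : simplex P by split => // j; exact: ltW.
pose S := \sum_j (ell x i - ell x j).
have S0 : 0 <= S by apply: sumr_ge0 => j _; rewrite subr_ge0.
pose t := eta / (2 * (eta + S)).
have eS : 0 < 2 * (eta + S) by lra.
have t0 : 0 < t by rewrite divr_gt0.
have t1 : t < 1 by rewrite ltr_pdivrMr //; lra.
have tS : t * S < eta / 2.
  rewrite mulrAC ltr_pdivrMr // -subr_gt0.
  have -> : eta / 2 * (2 * (eta + S)) - eta * S = eta * eta by field.
  by rewrite mulr_gt0.
have dpos : 0 < d%:R :> R by rewrite ltr0n.
pose q := t / d%:R.
have q0 : 0 < q by rewrite divr_gt0.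
have qd : q * d%:R = t by rewrite divfK // gt_eqF.
have d1 : 1 <= d%:R :> R by rewrite ler1n.
have qt : q <= t by rewrite ler_pdivrMr //; nra.
have q1 : q <= 1 by apply: le_trans qt (ltW t1).
pose Q : 'rV[R]_d := \row_j ((1 - t) * (j == i)%:R + q).
have Qq j : q <= Q 0 j by rewrite mxE lerDr mulr_ge0 // subr_ge0 ltW.
have QI : simplex_int Q.
  split; first by move=> j; exact: lt_le_trans q0 (Qq j).
  under eq_bigr do rewrite mxE.
  rewrite big_split /= -mulr_sumr sumr_const card_ord -mulr_natr qd.
  rewrite (bigD1 i) //= eqxx big1 ?addr0; first by rewrite mulr1 subrK.
  by move=> j /negbTE ->.
have costE : cost ell x Q = (1 - t) * ell x i + q * \sum_j ell x j.
  rewrite /cost; under eq_bigr do rewrite mxE mulrDr.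
  rewrite big_split /= mulr_sumr; congr (_ + _); last first.
    by apply: eq_bigr => j _; rewrite mulrC.
  rewrite (bigD1 i) //= eqxx big1 ?addr0; first by rewrite mulr1 mulrC.
  by move=> j /negbTE ->; rewrite mulr0 mulr0.
have SE : S = d%:R * ell x i - \sum_j ell x j.
  by rewrite /S sumrB sumr_const card_ord mulr_natl.
have cQ : ell x i - eta / 2 < cost ell x Q.
  have E1 : ell x i - cost ell x Q = q * S by rewrite costE SE -qd; ring.
  have : q * S <= t * S by rewrite ler_wpM2r.
  lra.
have oQ := oos x Q Xx QI.
have ev1 := @esup_ev _ _ _ ((-1/2)%:E) oQ (ltac:(by rewrite lte_fin; lra)).
have [del del0 Hdel] := eqc x P Xx Ps (eta / 2) (ltac:(lra)).
pose L := - ln q.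
have L0 : 0 <= L by rewrite /L oppr_ge0 ln_le0.
have := (cvgryPgt _).1 aT (2 * L).
move=> ev2.
pose N := (Num.trunc (d%:R / del)).+1.
near=> T.
have T0 : (0 < T)%N by near: T; exists 1%N.
have Tpos : 0 < T%:R :> R by rewrite ltr0n.
have dT : d%:R / T%:R < del.
  rewrite ltr_pdivrMr // mulrC -ltr_pdivrMr //.
  apply: lt_le_trans (truncnS_gt _) _.
  rewrite -/N ler_nat; near: T; by exists N.
have [s [ss sP]] := @realizable R d P T d0 T0 Ps.
have Hd := Hdel x (emp R s) Xx ss (ltac:(by rewrite subrr normr0)) (le_lt_trans sP dT) T.
have Hc : cost ell x Q <= ch x (emp R s) T.
  rewrite leNgt; apply/negP => Hlt.
  have pl := @prob_lb R d Q q T (fun Ph => cost ell x Q > ch x Ph T) s (ltW q0) Qq Hlt.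
  have qT : 0 < q ^+ T by rewrite exprn_gt0.
  have pp := lt_le_trans qT pl.
  have : (((a T)^-1)%:E * elog (prob_iid Q T (fun Ph => (cost ell x Q > ch x Ph T)%R)) < (-1/2)%:E)%E.
    by near: T.
  rewrite /elog gt_eqF // -EFinM lte_fin => Hlt2.
  have Hp : ln q *+ T <= ln (prob_iid Q T (fun Ph => (cost ell x Q > ch x Ph T)%R)).
    by rewrite -lnXn // ler_ln ?posrE.
  rewrite -mulr_natr in Hp.
  have aTT : 2 * L < a T / T%:R by near: T; exact: ev2.
  move: aTT; rewrite ltr_pdivlMr // => aTT.
  have aT0 := apos T.
  have ai : 0 < (a T)^-1 by rewrite invr_gt0.
  move: Hp Hlt2; set pr := ln (prob_iid _ _ _) => Hp Hlt2.
  have H3 : (a T)^-1 * (ln q * T%:R) <= (a T)^-1 * pr.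
    by rewrite ler_pM2l.
  have H5 : (a T)^-1 * (2 * L * T%:R) < (a T)^-1 * a T by rewrite ltr_pM2l.
  rewrite mulVf ?gt_eqF // in H5.
  move: H3 H5 Hlt2; rewrite /L; set y := (a T)^-1; set lq := ln q.
  nra.
move: Hd; rewrite ltr_norml => /andP [H1 H2].
lra.
Unshelve. all: by end_near.
Qed.

Lemma cost_le_max (R : realType) n d (ell : 'rV[R]_n -> 'I_d -> R) x P i :
  simplex P -> (forall j, ell x j <= ell x i) -> cost ell x P <= ell x i.
Proof.
move=> [P0 P1] Hi; rewrite /cost.
apply: (@le_trans _ _ (\sum_j ell x i * P 0 j)).
  by apply: ler_sum => j _; apply: ler_wpM2r.
by rewrite -mulr_sumr P1 mulr1.
Qed.

Theorem mainTheorem2 (R : realType) (n d : nat) (X : set 'rV[R]_n)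
  (ell : 'rV[R]_n -> 'I_d -> R) (a : nat -> R) :
  (1 < d)%N ->
  compact X ->
  (forall i, {within X, continuous (fun x => ell x i)}) ->
  (forall T, 0 < a T) ->
  a @ \oo --> +oo ->
  (fun T => a T / T%:R) @ \oo --> +oo ->
  let cR : predictor R n d := fun x P T => sup (range (ell x)) in
  [/\ regular X cR,
      (forall x P T, X x -> simplex P ->
         prob_iid P T (fun Ph => cost ell x P > cR x Ph T) = 0),
      oos_guarantee X ell a cR &
      forall ch : predictor R n d, regular X ch -> oos_guarantee X ell a ch ->
        preceq X ell cR ch].
Proof.
move=> d1 cX ellc apos ainf aT cR.
have d0 : (0 < d)%N by apply: ltnW.
have cRE x : exists i, (forall P T, cR x P T = ell x i) /\ forall j, ell x j <= ell x i.
  by have [i [Hi Hj]] := @sup_rangeP R d (ell x) d0; exists i; split.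
have part2 : forall x P T, X x -> simplex P ->
    prob_iid P T (fun Ph => cost ell x P > cR x Ph T) = 0.
  move=> x P T Xx Ps; rewrite /prob_iid big1 // => s _.
  have [i [Hi Hj]] := cRE x.
  have := @cost_le_max _ _ _ ell x P _ Ps Hj.
  by rewrite Hi leNgt => /negbTE ->; rewrite mulr0.
split => //.
-
  split.
  + have hb i : exists M, forall x, X x -> `|ell x i| <= M.
      have := compact_bounded (continuous_compact (ellc i) cX).
      move=> [M0 [_ HM]]; exists (M0 + 1) => x Xx.
      by apply: (HM (M0 + 1)); [rewrite ltrDl | exists x].
    have [Mf HMf] := boolp.choice hb.
    exists (\sum_i `|Mf i|) => T x P Xx Ps.
    have [i [Hi Hj]] := cRE x; rewrite Hi.
    apply: le_trans (HMf i x Xx) _; apply: le_trans (ler_norm _) _.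
    rewrite (bigD1 i) //= lerDl; exact: sumr_ge0.
  + move=> x P Xx Ps e e0.
    have [del del0 H] := @within_epsdel R n d X ell x ellc Xx e e0.
    exists del => // y Q Xy Qs xy PQ T.
    have [ix [Hx Hxj]] := cRE x; have [iy [Hy Hyj]] := cRE y.
    rewrite Hx Hy.
    have := H y Xy xy ix; have := H y Xy xy iy.
    rewrite !ltr_norml => /andP [h1 h2] /andP [h3 h4].
    have := Hxj iy; have := Hyj ix.
    move=> k1 k2; apply/andP; split; lra.
  + exists (fun _ _ _ => 0); split.
    * move=> T x P Xx Ps e e0; exists 1 => // Q Qs _.
      rewrite /cR subrr big1 ?subr0 ?normr0.
        by apply: mulr_ge0; [exact: ltW|].
      by move=> j _; rewrite mxE mul0r.
    * by exists 0 => T x P _ _; rewrite normr0.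
    * by move=> x P _ _ e e0; exists 1 => // y Q _ _ _ _ T; rewrite subrr normr0.
-
  move=> x P Xx [Pp P1].
  have Ps : simplex P by split => // j; exact: ltW.
  apply: esup_le_ev; apply: nearW => T.
  rewrite part2 // /elog eqxx mulrNy gtr0_sg ?invr_gt0 // mul1e.
  exact: leNye.
-
  move=> ch [_ eqc _] oos x P Xx PI.
  have Ps : simplex P by case: PI => Pp P1; split => // j; exact: ltW.
  have [i [Hi Hj]] := cRE x.
  have cM := @cost_le_max _ _ _ ell x P _ Ps Hj.
  apply: esup_le_eps => eps eps0.
  have Hs : sup (range (ell x)) = ell x i by exact: (Hi P 0%N).
  rewrite /cR Hs.
  have [D0|Dpos] := eqVneq (ell x i - cost ell x P) 0.
    apply: nearW => T; rewrite /eratio D0 normr0 eqxx.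
    case: ifP => _; rewrite lee_fin; first by lra.
    rewrite mul0r; lra.
  have Dp : 0 < ell x i - cost ell x P by rewrite lt_neqAle eq_sym Dpos subr_ge0.
  pose eta := (ell x i - cost ell x P) * eps / (1 + eps).
  have eta0 : 0 < eta by rewrite /eta !divr_gt0 ?mulr_gt0 //; lra.
  have := @key R n d X ell a ch x P i d0 apos aT eqc oos Xx PI Hj eta eta0.
  apply: filterS => T HT.
  set D := ell x i - cost ell x P.
  have ne : 1 + eps != 0 by rewrite gt_eqF //; lra.
  have E1 : (1 + eps) * (D - eta) = D.
    rewrite /eta -/D mulrBr [_ * (D * _ / _)]mulrC divfK //; ring.
  have pos : 0 < ch x P T - cost ell x P.
    have : 0 < D - eta.
      rewrite -(ltr_pM2l (_ : 0 < 1 + eps)); last lra.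
      by rewrite E1 mulr0.
    rewrite /D in HT *; lra.
  rewrite /eratio (gtr0_norm Dp) gtr0_norm // gt_eqF // lee_fin.
  rewrite ler_pdivrMr // mulrC.
  have H6 : (1 + eps) * (D - eta) <= (1 + eps) * (ch x P T - cost ell x P).
    rewrite ler_pM2l; last lra.
    rewrite /D in HT *; lra.
  rewrite -/D; rewrite E1 in H6; nra.
Qed.
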